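(* Let $(T_0,\widetilde T_0)$ be a joint pair of closed abstract Friedrichs operators on a complex Hilbert space $\mathcal{H}$, with $T_1:=\widetilde T_0^*$, $\widetilde T_1:=T_0^*$ and $\mathcal{W}_0:=\operatorname{dom}T_0=\operatorname{dom}\widetilde T_0$. Then the restrictions $T_1|_{\mathcal{W}_0+\operatorname{ker}\widetilde T_1}$ and $\widetilde T_1|_{\mathcal{W}_0+\operatorname{ker}T_1}$ are mutually adjoint, i.e. $(T_1|_{\mathcal{W}_0+\operatorname{ker}\widetilde T_1})^*=\widetilde T_1|_{\mathcal{W}_0+\operatorname{ker}T_1}$ and $(\widetilde T_1|_{\mathcal{W}_0+\operatorname{ker}T_1})^*=T_1|_{\mathcal{W}_0+\operatorname{ker}\widetilde T_1}$, and each of them is a bijection from its domain onto $\mathcal{H}$.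
   Context: $\mathcal{H}$ is a complex Hilbert space with inner product $\langle\cdot,\cdot\rangle$ and norm $\|\cdot\|$. A pair $(T,\widetilde T)$ of densely defined linear operators on $\mathcal{H}$ is a joint pair of abstract Friedrichs operators if: (T1) $T$ and $\widetilde T$ have a common dense domain $\mathcal{D}$ and $\langle T\varphi,\psi\rangle=\langle\varphi,\widetilde T\psi\rangle$ for all $\varphi,\psi\in\mathcal{D}$; (T2) there is $c>0$ with $\|(T+\widetilde T)\varphi\|\le c\|\varphi\|$ for all $\varphi\in\mathcal{D}$; (T3) there is $\mu_0>0$ with $\langle (T+\widetilde T)\varphi,\varphi\rangle\ge 2\mu_0\|\varphi\|^2$ for all $\varphi\in\mathcal{D}$. A joint pair of closed abstract Friedrichs operators is such a pair $(T_0,\widetilde T_0)$ in which both operators are closed. One has $T_0\subseteq T_1$, $\widetilde T_0\subseteq\widetilde T_1$ and $\operatorname{dom}T_1=\operatorname{dom}\widetilde T_1$. *)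

(* Defs.v *)
From HB Require Import structures.
From mathcomp Require Import all_boot all_order all_algebra.
From mathcomp Require Import complex reals.
Set Implicit Arguments. Unset Strict Implicit. Unset Printing Implicit Defensive.
Import Order.TTheory GRing.Theory Num.Theory.
Local Open Scope ring_scope.

Section Hilbert.
Variable R : realType.
Local Notation C := R[i].
Variable V : lmodType C.

Record inner_product (ip : V -> V -> C) : Prop := InnerProduct {
  ip_linl : forall (a : C) (x y z : V), ip (a *: x + y) z = a * ip x z + ip y z;
  ip_conj : forall x y : V, ip y x = conjc (ip x y);
  ip_ge0  : forall x : V, 0 <= ip x x;  (* in the order of C: real and >= 0 *)
  ip_eq0  : forall x : V, ip x x = 0 -> x = 0 }.

Definition hnorm (ip : V -> V -> C) (x : V) : R := Num.sqrt (complex.Re (ip x x)).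

Definition cauchy_seq (ip : V -> V -> C) (u : nat -> V) : Prop :=
  forall e : R, 0 < e -> exists N : nat, forall m n : nat,
    (N <= m)%N -> (N <= n)%N -> hnorm ip (u m - u n) < e.

Definition seq_converges_to (ip : V -> V -> C) (u : nat -> V) (l : V) : Prop :=
  forall e : R, 0 < e -> exists N : nat, forall n : nat,
    (N <= n)%N -> hnorm ip (u n - l) < e.

Record hilbert_space (ip : V -> V -> C) : Prop := HilbertSpace {
  hs_inner : inner_product ip;
  hs_complete : forall u : nat -> V, cauchy_seq ip u ->
                  exists l : V, seq_converges_to ip u l }.

(** An operator is a domain together with a map; only its values on the
  domain are meaningful. *)
Record op := Op { dom : V -> Prop; app : V -> V }.

Definition subspace (D : V -> Prop) : Prop :=
  D 0 /\ forall (a : C) (x y : V), D x -> D y -> D (a *: x + y).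

Definition dense_in (ip : V -> V -> C) (D : V -> Prop) : Prop :=
  forall (x : V) (e : R), 0 < e -> exists d : V, D d /\ hnorm ip (x - d) < e.

Definition linear_op (T : op) : Prop :=
  subspace (dom T) /\
  forall (a : C) (x y : V), dom T x -> dom T y ->
    app T (a *: x + y) = a *: app T x + app T y.

Definition densely_defined_linear (ip : V -> V -> C) (T : op) : Prop :=
  linear_op T /\ dense_in ip (dom T).

Definition closed_op (ip : V -> V -> C) (T : op) : Prop :=
  forall (u : nat -> V) (x y : V),
    (forall n, dom T (u n)) ->
    seq_converges_to ip u x -> seq_converges_to ip (fun n => app T (u n)) y ->
    dom T x /\ app T x = y.

Definition is_adjoint (ip : V -> V -> C) (T S : op) : Prop :=
  (forall y : V, dom S y <->
     exists z : V, forall x : V, dom T x -> ip (app T x) y = ip x z) /\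
  (forall x y : V, dom T x -> dom S y -> ip (app T x) y = ip x (app S y)).

Definition op_restrict (T : op) (D : V -> Prop) : op := Op D (app T).

Definition op_kernel (T : op) : V -> Prop := fun x => dom T x /\ app T x = 0.

Definition set_sum (D E : V -> Prop) : V -> Prop :=
  fun x => exists d e : V, D d /\ E e /\ x = d + e.

Definition bijective_onto_space (T : op) : Prop :=
  (forall x y : V, dom T x -> dom T y -> app T x = app T y -> x = y) /\
  (forall h : V, exists x : V, dom T x /\ app T x = h).

Definition joint_pair_AFO (ip : V -> V -> C) (T T' : op) : Prop :=
  densely_defined_linear ip T /\ densely_defined_linear ip T' /\
  (forall x : V, dom T x <-> dom T' x) /\
  (forall x y : V, dom T x -> dom T y -> ip (app T x) y = ip x (app T' y)) /\
  (exists c : R, 0 < c /\ forall x : V, dom T x ->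
      hnorm ip (app T x + app T' x) <= c * hnorm ip x) /\
  (exists mu0 : R, 0 < mu0 /\ forall x : V, dom T x ->
      (((2 * mu0 * hnorm ip x ^+ 2)%R)%:C)%C <= ip (app T x + app T' x) x).

Definition closed_joint_pair_AFO (ip : V -> V -> C) (T T' : op) : Prop :=
  joint_pair_AFO ip T T' /\ closed_op ip T /\ closed_op ip T'.

End Hilbert.

(* Main.v *)
Require Import Defs.
From HB Require Import structures.
From mathcomp Require Import all_boot all_order all_algebra.
From mathcomp Require Import complex reals classical_sets.
From mathcomp Require Import ring lra.
From Stdlib Require Import ClassicalEpsilon.
Set Implicit Arguments. Unset Strict Implicit. Unset Printing Implicit Defensive.
Import Order.TTheory GRing.Theory Num.Theory.
Local Open Scope ring_scope.
Local Open Scope complex_scope.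

Section Basics.
Variable R : realType.
Local Notation C := R[i].
Variable V : lmodType C.
Variable ip : V -> V -> C.
Hypothesis hip : inner_product ip.

Local Notation N := (hnorm ip).
Definition rp (x y : V) : R := complex.Re (ip x y).

Lemma ip0l y : ip 0 y = 0.
Proof.
have h := ip_linl hip 1 0 0 y; rewrite scale1r addr0 mul1r in h.
by apply: (addrI (ip 0 y)); rewrite addr0 -h.
Qed.

Lemma ipDl x y z : ip (x + y) z = ip x z + ip y z.
Proof. by have := ip_linl hip 1 x y z; rewrite scale1r mul1r. Qed.

Lemma ipZl a x z : ip (a *: x) z = a * ip x z.
Proof. by have := ip_linl hip a x 0 z; rewrite addr0 ip0l addr0. Qed.

Lemma ipNl x z : ip (- x) z = - ip x z.
Proof. by rewrite -scaleN1r ipZl mulN1r. Qed.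

Lemma ipBl x y z : ip (x - y) z = ip x z - ip y z.
Proof. by rewrite ipDl ipNl. Qed.

Lemma cjD (a b : C) : conjc (a + b) = conjc a + conjc b.
Proof. by case: a => ? ?; case: b => ? ? /=; congr Complex; ring. Qed.
Lemma cjM (a b : C) : conjc (a * b) = conjc a * conjc b.
Proof. by case: a => ? ?; case: b => ? ? /=; congr Complex; ring. Qed.
Lemma cjN (a : C) : conjc (- a) = - conjc a.
Proof. by case: a => ? ? /=; congr Complex; ring. Qed.
Lemma cj0 : conjc (0 : C) = 0.
Proof. by rewrite /= oppr0. Qed.

Lemma ipJ x y : conjc (ip x y) = ip y x.
Proof. by rewrite (ip_conj hip x y). Qed.

Lemma ipDr x y z : ip x (y + z) = ip x y + ip x z.
Proof. by rewrite -ipJ ipDl cjD !ipJ. Qed.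

Lemma ipZr a x y : ip x (a *: y) = conjc a * ip x y.
Proof. by rewrite -ipJ ipZl cjM ipJ. Qed.

Lemma ip0r x : ip x 0 = 0.
Proof. by rewrite -ipJ ip0l cj0. Qed.

Lemma ipNr x z : ip x (- z) = - ip x z.
Proof. by rewrite -ipJ ipNl cjN ipJ. Qed.

Lemma ipBr x y z : ip x (y - z) = ip x y - ip x z.
Proof. by rewrite ipDr ipNr. Qed.

Lemma ReD (a b : C) : complex.Re (a + b) = complex.Re a + complex.Re b.
Proof. by case: a; case: b. Qed.
Lemma ReN (a : C) : complex.Re (- a) = - complex.Re a.
Proof. by case: a. Qed.
Lemma ReB (a b : C) : complex.Re (a - b) = complex.Re a - complex.Re b.
Proof. by rewrite ReD ReN. Qed.
Lemma ReJ (a : C) : complex.Re (conjc a) = complex.Re a.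
Proof. by case: a. Qed.
Lemma ReRM (r : R) (a : C) : complex.Re (r%:C * a) = r * complex.Re a.
Proof. by case: a => a b /=; ring. Qed.
Lemma ReiM (a : C) : complex.Re ('i * a) = - complex.Im a.
Proof. by case: a => a b /=; ring. Qed.
Lemma Re0 : complex.Re (0 : C) = 0. Proof. by []. Qed.

Lemma complex_ext (a b : C) : complex.Re a = complex.Re b ->
  complex.Re ('i * a) = complex.Re ('i * b) -> a = b.
Proof.
rewrite !ReiM; case: a => a1 a2; case: b => b1 b2 /= -> h.
by congr Complex; apply: oppr_inj.
Qed.

Lemma rpC x y : rp x y = rp y x.
Proof. by rewrite /rp -ipJ ReJ. Qed.
Lemma rpDl x y z : rp (x + y) z = rp x z + rp y z.
Proof. by rewrite /rp ipDl ReD. Qed.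
Lemma rpDr x y z : rp x (y + z) = rp x y + rp x z.
Proof. by rewrite /rp ipDr ReD. Qed.
Lemma rpNl x z : rp (- x) z = - rp x z.
Proof. by rewrite /rp ipNl ReN. Qed.
Lemma rpNr x z : rp x (- z) = - rp x z.
Proof. by rewrite /rp ipNr ReN. Qed.
Lemma rpBl x y z : rp (x - y) z = rp x z - rp y z.
Proof. by rewrite rpDl rpNl. Qed.
Lemma rpBr x y z : rp x (y - z) = rp x y - rp x z.
Proof. by rewrite rpDr rpNr. Qed.
Lemma rpZl (r : R) x z : rp (r%:C *: x) z = r * rp x z.
Proof. by rewrite /rp ipZl ReRM. Qed.
Lemma rpZr (r : R) x z : rp x (r%:C *: z) = r * rp x z.
Proof. by rewrite /rp ipZr conjc_real ReRM. Qed.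
Lemma rp0l z : rp 0 z = 0. Proof. by rewrite /rp ip0l. Qed.
Lemma rp0r z : rp z 0 = 0. Proof. by rewrite /rp ip0r. Qed.

Lemma rp_ge0 x : 0 <= rp x x.
Proof. by have := ip_ge0 hip x; rewrite lecE => /andP[_]. Qed.

Lemma N_ge0 x : 0 <= N x.
Proof. exact: sqrtr_ge0. Qed.

Lemma N_sqr x : N x ^+ 2 = rp x x.
Proof. by rewrite /hnorm sqr_sqrtr // rp_ge0. Qed.

Lemma rp_eq0 x : rp x x = 0 -> x = 0.
Proof.
move=> h; apply: (ip_eq0 hip).
have := ip_ge0 hip x; rewrite lecE => /andP[/eqP hi _].
move: h hi; rewrite /rp; case: (ip x x) => a b /= -> ->; by [].
Qed.

Lemma N_eq0 x : N x = 0 -> x = 0.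
Proof. by move=> h; apply: rp_eq0; rewrite -N_sqr h expr0n. Qed.

Lemma CS_sq x y : rp x y ^+ 2 <= rp x x * rp y y.
Proof.
have [y0|ny0] := eqVneq (rp y y) 0.
  by rewrite (rp_eq0 y0) !rp0r expr0n /= mulr0.
have qp : 0 < rp y y by rewrite lt0r ny0 rp_ge0.
set p := rp x y; set q := rp y y; set X := rp x x.
have h := rp_ge0 (x - (p / q)%:C *: y).
rewrite !rpBl !rpBr !rpZl !rpZr -/p -/q -/X (rpC y x) -/p in h.
have e : X - p / q * p - (p / q * p - p / q * (p / q * q)) = X - p ^+ 2 / q.
  by field; rewrite gt_eqF.
rewrite e subr_ge0 ler_pdivrMr // in h.
Qed.

Lemma CS x y : rp x y <= N x * N y.
Proof.
have h := CS_sq x y; rewrite -!N_sqr -exprMn in h.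
have : 0 <= N x * N y by rewrite mulr_ge0 // N_ge0.
move: h; set P := N x * N y; set a := rp x y; nra.
Qed.

Lemma CSabs x y : - (N x * N y) <= rp x y.
Proof. have := CS x (- y); rewrite rpNr. 
have -> : N (- y) = N y by rewrite /hnorm /rp ipNl ipNr opprK.
lra. Qed.

Lemma NN x : N (- x) = N x.
Proof. by rewrite /hnorm /rp ipNl ipNr opprK. Qed.

Lemma NB x y : N (x - y) = N (y - x).
Proof. by rewrite -NN opprB. Qed.

Lemma N_tri x y : N (x + y) <= N x + N y.
Proof.
have h : N (x + y) ^+ 2 <= (N x + N y) ^+ 2.
  rewrite N_sqr rpDl !rpDr (rpC y x) sqrrD !N_sqr.
  have := CS x y; lra.
have := N_ge0 (x + y); have := N_ge0 x; have := N_ge0 y; nra.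
Qed.

Lemma N_le_sq x (b : R) : 0 <= b -> rp x x <= b ^+ 2 -> N x <= b.
Proof. move=> b0 h; rewrite -N_sqr in h; have := N_ge0 x; nra. Qed.

End Basics.


Lemma choice_nat (T : Type) (P : nat -> T -> Prop) :
  (forall n, exists x, P n x) -> exists f : nat -> T, forall n, P n (f n).
Proof.
move=> H; exists (fun n => proj1_sig (constructive_indefinite_description _ (H n))).
by move=> n; exact: (proj2_sig (constructive_indefinite_description _ (H n))).
Qed.

Section Seqs.
Variable R : realType.
Local Notation C := R[i].

Lemma le0_eps (a K : R) : (forall e : R, 0 < e -> a <= e * K) -> a <= 0.
Proof.
move=> H; case: (lerP a 0) => // ha; exfalso.
have K0 : 0 <= K by have := H 1 ltr01; lra.
have K1 : 0 < K + 1 by lra.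
have ep : 0 < a / (K + 1) by rewrite divr_gt0.
have := H _ ep.
have -> : a / (K + 1) * K = a - a / (K + 1) by field; rewrite gt_eqF.
lra.
Qed.

Definition epsn (n : nat) : R := (n.+1%:R)^-1.

Lemma archi_eps (e : R) : 0 < e ->
  exists N0 : nat, forall n, (N0 <= n)%N -> epsn n < e.
Proof.
move=> ep; rewrite /epsn; have ie : 0 <= e^-1 by rewrite invr_ge0 ltW.
exists (Num.Def.archi_bound e^-1) => n hn.
have h1 := archi_boundP ie.
have h2 : (Num.Def.archi_bound e^-1)%:R <= n.+1%:R :> R.
  by rewrite ler_nat; apply: leqW.
rewrite invf_plt ?posrE //.
lra.
Qed.

Lemma inv_pos (n : nat) : 0 < epsn n.
Proof. by rewrite /epsn invr_gt0 ltr0n. Qed.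

Lemma inv_le (n m : nat) : (m <= n)%N -> epsn n <= epsn m.
Proof.
move=> h; rewrite /epsn lef_pV2 ?posrE ?ltr0n // ler_nat; exact: h.
Qed.
End Seqs.

Section Analysis.
Variable R : realType.
Local Notation C := R[i].
Variable V : lmodType C.
Variable ip : V -> V -> C.
Hypothesis hip : inner_product ip.
Local Notation N := (hnorm ip).
Local Notation rp := (rp ip).

Definition cvg (u : nat -> V) l := seq_converges_to ip u l.

Lemma cvg_cauchy u l : cvg u l -> cauchy_seq ip u.
Proof.
move=> H e ep; have e2 : 0 < e / 2 by rewrite divr_gt0.
have [N0 HN] := H _ e2; exists N0 => m n hm hn.
have := N_tri hip (u m - l) (l - u n).
have -> : u m - l + (l - u n) = u m - u n by rewrite addrA subrK.
rewrite (NB hip l); have := HN _ hm; have := HN _ hn; lra.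
Qed.

Lemma cauchy_bound (u v : nat -> V) (K : R) : 0 <= K ->
  (forall n m, N (u n - u m) <= K * N (v n - v m)) ->
  cauchy_seq ip v -> cauchy_seq ip u.
Proof.
move=> K0 hb hv e ep.
have K1 : 0 < K + 1 by lra.
have e1 : 0 < e / (K + 1) by rewrite divr_gt0.
have [N0 HN] := hv _ e1; exists N0 => m n hm hn.
have h := HN _ _ hm hn.
have h2 : K * N (v m - v n) <= K * (e / (K + 1)) by rewrite ler_wpM2l // ltW.
have h3 : K * (e / (K + 1)) < e.
  have -> : K * (e / (K + 1)) = e - e / (K + 1) by field; rewrite gt_eqF.
  lra.
have := hb m n; lra.
Qed.

Lemma cvg_bound2 (u v w : nat -> V) a b c (K : R) : 0 <= K ->
  (forall n, N (u n - a) <= K * (N (v n - b) + N (w n - c))) ->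
  cvg v b -> cvg w c -> cvg u a.
Proof.
move=> K0 hb hv hw e ep.
have K1 : 0 < 2 * K + 1 by lra.
have e1 : 0 < e / (2 * K + 1) by rewrite divr_gt0.
have [N1 H1] := hv _ e1; have [N2 H2] := hw _ e1.
exists (maxn N1 N2) => n hn.
have h1 := H1 n (leq_trans (leq_maxl _ _) hn).
have h2 := H2 n (leq_trans (leq_maxr _ _) hn).
have h3 : K * (N (v n - b) + N (w n - c)) <= K * (2 * (e / (2 * K + 1))).
  rewrite ler_wpM2l //; lra.
have h4 : K * (2 * (e / (2 * K + 1))) < e.
  have -> : K * (2 * (e / (2 * K + 1))) = e - e / (2 * K + 1).
    by field; rewrite gt_eqF.
  lra.
have := hb n; lra.
Qed.

Lemma cvg_inv (u : nat -> V) w :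
  (forall n, N (u n - w) < epsn R n) -> cvg u w.
Proof.
move=> H e ep; have [N0 HN] := archi_eps ep; exists N0 => n hn.
move: (H n) (HN n hn); exact: lt_trans.
Qed.

Lemma Nabs_le (t r X : R) : - X <= r -> r <= X -> t * r <= `|t| * X.
Proof.
move=> h1 h2; case: (lerP 0 t) => ht.
  by rewrite ger0_norm //; nra.
by rewrite ltr0_norm //; nra.
Qed.

Lemma riesz (D : V -> Prop) (S : V -> V) (phi : V -> C) (K : R) :
  hilbert_space ip -> subspace D ->
  (forall a x y, D x -> D y -> S (a *: x + y) = a *: S x + S y) ->
  (forall a x y, D x -> D y -> phi (a *: x + y) = a * phi x + phi y) ->
  0 <= K -> (forall d, D d -> complex.Re (phi d) <= K * N (S d)) ->
  exists w, (forall d, D d -> phi d = ip (S d) w) /\ N w <= K /\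
    (forall e : R, 0 < e -> exists d, D d /\ N (S d - w) < e).
Proof.
move=> hH [D0 Dl] Sl phil K0 hb.
have DZ a x : D x -> D (a *: x) by move=> Dx; have := Dl a x 0 Dx D0; rewrite addr0.
have DD x y : D x -> D y -> D (x + y).
  by move=> Dx Dy; have := Dl 1 x y Dx Dy; rewrite scale1r.
have S0 : S 0 = 0.
  have := Sl 1 0 0 D0 D0; rewrite !scale1r addr0 => h.
  by apply: (addrI (S 0)); rewrite addr0 -h.
have SZ a x : D x -> S (a *: x) = a *: S x.
  by move=> Dx; have := Sl a x 0 Dx D0; rewrite !addr0 S0 addr0.
have SD x y : D x -> D y -> S (x + y) = S x + S y.
  by move=> Dx Dy; have := Sl 1 x y Dx Dy; rewrite !scale1r.
have phi0 : phi 0 = 0.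
  have := phil 1 0 0 D0 D0; rewrite scale1r addr0 mul1r => h.
  by apply: (addrI (phi 0)); rewrite addr0 -h.
have phiZ a x : D x -> phi (a *: x) = a * phi x.
  by move=> Dx; have := phil a x 0 Dx D0; rewrite !addr0 phi0 addr0.
have phiD x y : D x -> D y -> phi (x + y) = phi x + phi y.
  by move=> Dx Dy; have := phil 1 x y Dx Dy; rewrite scale1r mul1r.
pose J d := rp (S d) (S d) - 2 * complex.Re (phi d).
have Jlow d : D d -> - K ^+ 2 <= J d.
  move=> Dd; rewrite /J -(N_sqr hip); have := hb d Dd; have := N_ge0 ip (S d).
  have := sqr_ge0 (N (S d) - K); rewrite sqrrB; lra.
pose E : set R := fun r : R => exists d, D d /\ r = - J d.
have hasE : has_sup E.
  split; first by exists 0; exists 0; split => //; rewrite /J S0 phi0 rp0l; simpc.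
  exists (K ^+ 2) => r [d [Dd ->]]; have := Jlow d Dd; lra.
set s := sup E.
have Jge d : D d -> - s <= J d.
  move=> Dd; have : E (- J d) by exists d.
  move/(sup_upper_bound hasE) => h; rewrite -/s in h; lra.
have Jcl n : exists d, D d /\ J d < - s + epsn R n.
  have [r [d [Dd er]] hr] := sup_adherent (inv_pos R n) hasE.
  by exists d; split => //; rewrite er -/s in hr; lra.
have [dn Hdn] := choice_nat Jcl.
pose u n := S (dn n).
have para n m : N (u n - u m) ^+ 2 <= 2 * epsn R n + 2 * epsn R m.
  have [Dn Jn] := Hdn n; have [Dm Jm] := Hdn m.
  pose h : C := (2^-1 : R)%:C.
  have Dmid : D (h *: dn n + h *: dn m) by apply: DD; apply: DZ.
  have := Jge _ Dmid; rewrite /J SD ?SZ ?phiD ?phiZ //; try apply: DZ => //.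
  rewrite /J in Jn Jm; rewrite -/(u n) -/(u m) in Jn Jm *.
  rewrite (N_sqr hip) !(rpBl hip, rpBr hip, rpDl hip, rpDr hip, rpZl hip, rpZr hip, rpNl hip, rpNr hip).
  rewrite ReD /h !ReRM (rpC hip (u m) (u n)).
  move: Jn Jm; set A := rp (u n) (u n); set B := rp (u n) (u m); set Cc := rp (u m) (u m).
  set Pn := complex.Re (phi (dn n)); set Pm := complex.Re (phi (dn m)).
  lra.
have cau : cauchy_seq ip u.
  move=> e ep; have e2 : 0 < e ^+ 2 / 4 by rewrite divr_gt0 // exprn_gt0.
  have [N0 HN] := archi_eps e2; exists N0 => m n hm hn.
  have := para m n; have := HN _ hm; have := HN _ hn; have := N_ge0 ip (u m - u n).
  nra.
have [w hw] := hs_complete hH cau.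
have key y : D y -> complex.Re (phi y) = rp (S y) w.
  move=> Dy; set Q := rp (S y) (S y); set g := rp (S y) w - complex.Re (phi y).
  have step1 t : 0 <= 2 * t * g + t ^+ 2 * Q.
    rewrite -subr_le0 sub0r.
    apply: (@le0_eps _ _ (1 + 2 * `|t| * N (S y))) => eta etap.
    have [N1 H1] := archi_eps etap; have [N2 H2] := hw _ etap.
    set n := maxn N1 N2.
    have h1 := H1 n (leq_maxl _ _); have h2 := H2 n (leq_maxr _ _).
    have [Dn Jn] := Hdn n.
    have Dt : D (dn n + t%:C *: y) by apply: DD => //; apply: DZ.
    have := Jge _ Dt; rewrite /J in Jn *.
    rewrite SD ?SZ ?phiD ?phiZ //; try apply: DZ => //.
    rewrite ReD !ReRM !(rpDl hip, rpDr hip, rpZl hip, rpZr hip, rpNl hip, rpNr hip) -/(u n) in Jn *.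
    have e1 : rp (u n) (S y) = rp (S y) w + rp (u n - w) (S y).
      by rewrite (rpBl hip) (rpC hip w); ring.
    rewrite (rpC hip (S y) (u n)) e1 -/Q.
    set r := rp (u n - w) (S y).
    have hr1 := CS hip (u n - w) (S y); have hr2 := CSabs hip (u n - w) (S y).
    rewrite -/r in hr1 hr2.
    have htr := Nabs_le t hr2 hr1.
    have hX : `|t| * (N (u n - w) * N (S y)) <= `|t| * (eta * N (S y)).
      apply: ler_wpM2l; first exact: normr_ge0.
      apply: ler_wpM2r; [exact: N_ge0 | exact: ltW].
    move: Jn; rewrite -/g.
    set A := rp (u n) (u n); set P := complex.Re (phi (dn n)); set Py := complex.Re (phi y).
    have eg : g = rp (S y) w - Py by [].
    move=> Jn Jt.
    have ht : 0 <= `|t| := normr_ge0 t.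
    nra.
  have g1 : - g <= 0.
    apply: (@le0_eps _ _ (Q / 2)) => e ep; have := step1 e; nra.
  have g2 : g <= 0.
    apply: (@le0_eps _ _ (Q / 2)) => e ep; have := step1 (- e); nra.
  rewrite /g in g1 g2; lra.
have phiw d : D d -> phi d = ip (S d) w.
  move=> Dd; apply: complex_ext; first exact: key.
  by rewrite -phiZ // key ?SZ //; [rewrite /rp ipZl | apply: DZ].
exists w; split => //; split.
  have h : rp w w - K * N w <= 0.
    apply: (@le0_eps _ _ (K + N w)) => eta etap.
    have [N2 H2] := hw _ etap; have h2 := H2 N2 (leqnn _).
    have [Dn _] := Hdn N2.
    have e1 : rp (u N2) w = complex.Re (phi (dn N2)) by rewrite phiw.
    have hb1 := hb _ Dn; rewrite -/(u N2) in hb1.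
    have ht := N_tri hip w (u N2 - w); rewrite addrC subrK in ht.
    have e2 : rp w w = rp (u N2) w - rp (u N2 - w) w by rewrite (rpBl hip); ring.
    have hc := CS hip (u N2 - w) w.
    have hc2 : N (u N2 - w) * N w <= eta * N w.
      by apply: ler_wpM2r; [exact: N_ge0 | exact: ltW].
    have hc3 : K * N (u N2 - w) <= K * eta by apply: ler_wpM2l => //; exact: ltW.
    have hK : K * N (u N2) <= K * (N w + N (u N2 - w)) by apply: ler_wpM2l.
    have hc4 := CSabs hip (u N2 - w) w; rewrite mulrDr in hK; lra.
  rewrite -(N_sqr hip) in h; have := N_ge0 ip w; nra.
move=> e ep; have [N2 H2] := hw _ ep; exists (dn N2); split; first by case: (Hdn N2).
exact: H2.
Qed.

End Analysis.


Section Ops.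
Variable R : realType.
Local Notation C := R[i].
Variable V : lmodType C.
Variable ip : V -> V -> C.
Hypothesis hip : inner_product ip.
Local Notation N := (hnorm ip).
Local Notation rp := (rp ip).
Local Notation cvg := (cvg ip).

Lemma sub0 (D : V -> Prop) : subspace D -> D 0. Proof. by case. Qed.
Lemma subZ (D : V -> Prop) a x : subspace D -> D x -> D (a *: x).
Proof. by move=> [D0 Dl] Dx; have := Dl a x 0 Dx D0; rewrite addr0. Qed.
Lemma subD (D : V -> Prop) x y : subspace D -> D x -> D y -> D (x + y).
Proof. by move=> [D0 Dl] Dx Dy; have := Dl 1 x y Dx Dy; rewrite scale1r. Qed.
Lemma subN (D : V -> Prop) x : subspace D -> D x -> D (- x).
Proof. by move=> hD Dx; rewrite -scaleN1r; apply: subZ. Qed.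
Lemma subB (D : V -> Prop) x y : subspace D -> D x -> D y -> D (x - y).
Proof. by move=> hD Dx Dy; apply: subD => //; apply: subN. Qed.

Lemma op0 (T : op V) : linear_op T -> app T 0 = 0.
Proof.
move=> [[D0 _] hl]; have := hl 1 0 0 D0 D0; rewrite !scale1r addr0 => h.
by apply: (addrI (app T 0)); rewrite addr0 -h.
Qed.
Lemma opZ (T : op V) a x : linear_op T -> dom T x -> app T (a *: x) = a *: app T x.
Proof.
move=> hT Dx; have := hT.2 a x 0 Dx (sub0 hT.1).
by rewrite !addr0 (op0 hT) addr0.
Qed.
Lemma opD (T : op V) x y : linear_op T -> dom T x -> dom T y -> app T (x + y) = app T x + app T y.
Proof. by move=> hT Dx Dy; have := hT.2 1 x y Dx Dy; rewrite !scale1r. Qed.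
Lemma opN (T : op V) x : linear_op T -> dom T x -> app T (- x) = - app T x.
Proof. by move=> hT Dx; rewrite -(scaleN1r x) opZ // scaleN1r. Qed.
Lemma opB (T : op V) x y : linear_op T -> dom T x -> dom T y -> app T (x - y) = app T x - app T y.
Proof.
move=> hT Dx Dy; rewrite opD ?opN //; exact: (subN hT.1).
Qed.

Lemma rp_small z l : (forall e : R, 0 < e -> exists v, rp z v = 0 /\ N (v - l) < e) ->
  rp z l = 0.
Proof.
move=> H.
have key (e : R) : 0 < e -> `|rp z l| <= e * N z.
  move=> ep; have [v [h0 h1]] := H e ep.
  have e1 : rp z l = - rp z (v - l) by rewrite (rpBr hip) h0; ring.
  have c1 := CS hip z (v - l); have c2 := CSabs hip z (v - l).
  have c3 : N z * N (v - l) <= N z * e by apply: ler_wpM2l; [exact: N_ge0 | exact: ltW].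
  rewrite e1 normrN ler_norml; apply/andP; split; lra.
have h1 : `|rp z l| <= 0 by apply: (@le0_eps _ _ (N z)) => e ep; exact: key.
by apply/normr0_eq0/eqP; rewrite eq_le h1 normr_ge0.
Qed.

Lemma dense_uniq (D : V -> Prop) z1 z2 : dense_in ip D ->
  (forall x, D x -> ip x z1 = ip x z2) -> z1 = z2.
Proof.
move=> hD H; apply/eqP; rewrite -subr_eq0; apply/eqP; apply: (rp_eq0 hip).
set z := z1 - z2; apply: rp_small => e ep.
have [d [Dd hd]] := hD z e ep; exists d; split.
  by rewrite (rpC hip) // /rp /z (ipBr hip) H // subrr.
by rewrite (NB hip).
Qed.

Lemma ReiJ z x : complex.Re ('i * ip z x) = - rp z ('i *: x).
Proof.
rewrite /rp (ipZr hip); case: (ip z x) => a b /=; ring.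
Qed.

Lemma NiZ x : N ('i *: x) = N x.
Proof.
rewrite /hnorm (ipZl hip) (ipZr hip); congr Num.sqrt; case: (ip x x) => a b /=; ring.
Qed.

Lemma ip_lim0 z (k : nat -> V) l : (forall n, ip z (k n) = 0) -> cvg k l -> ip z l = 0.
Proof.
move=> H hk; apply: complex_ext.
  apply: rp_small => e ep; have [n hn] := hk e ep; exists (k n); split.
    by rewrite /rp H.
  exact: hn n (leqnn _).
rewrite ReiJ mulr0 /=; apply/eqP; rewrite oppr_eq0; apply/eqP.
apply: rp_small => e ep; have [n hn] := hk e ep; exists ('i *: k n); split.
  by rewrite /rp (ipZr hip) H mulr0.
by rewrite -scalerBr NiZ; exact: hn n (leqnn _).
Qed.

Lemma adj_ext (T S : op V) (P : V -> Prop) (F : V -> V) : is_adjoint ip T S ->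
  dense_in ip (dom T) ->
  (forall y x, dom T y -> P x -> ip (app T y) x = ip y (F x)) ->
  forall x, P x -> dom S x /\ app S x = F x.
Proof.
move=> [hd hv] hD H x Px.
have Sx : dom S x by apply/hd; exists (F x) => y Dy; exact: H.
split => //; apply: (dense_uniq hD) => y Dy.
by rewrite -hv // H.
Qed.

Lemma adj_lin (T S : op V) : is_adjoint ip T S -> dense_in ip (dom T) -> linear_op S.
Proof.
move=> hA hD.
have S0 : dom S 0 by apply/hA.1; exists 0 => y _; rewrite !(ip0r hip).
have SL a x y : dom S x -> dom S y ->
    dom S (a *: x + y) /\ app S (a *: x + y) = a *: app S x + app S y.
  move=> Sx Sy.
  apply: (@adj_ext T S (fun v => v = a *: x + y) (fun _ => a *: app S x + app S y) hA hD _ (a *: x + y) (erefl _)).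
  move=> z v Dz ->; rewrite (ipDr hip) (ipZr hip) !hA.2 // (ipDr hip) (ipZr hip) //.
split; first by split => // a x y Sx Sy; case: (SL a x y Sx Sy).
by move=> a x y Sx Sy; case: (SL a x y Sx Sy).
Qed.

Lemma adj_ker_closed (T S : op V) (k : nat -> V) l : is_adjoint ip T S -> dense_in ip (dom T) ->
  (forall n, op_kernel S (k n)) -> cvg k l -> op_kernel S l.
Proof.
move=> hA hD hk hl.
have H : forall y x, dom T y -> x = l -> ip (app T y) x = ip y ((fun _ => 0) x).
  move=> y x Dy ->; rewrite (ip0r hip); apply: ip_lim0 hl => n.
  by case: (hk n) => Sk Tk; rewrite hA.2 // Tk (ip0r hip).
by have [h1 h2] := @adj_ext T S (fun v => v = l) (fun _ => 0) hA hD H l (erefl l).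
Qed.

End Ops.


Lemma eps_zero (R : realType) (a K : R) :
  (forall e : R, 0 < e -> - (e * K) <= a /\ a <= e * K) -> a = 0.
Proof.
move=> H; have h1 : a <= 0 by apply: (@le0_eps _ _ K) => e ep; case: (H e ep).
have h2 : - a <= 0 by apply: (@le0_eps _ _ K) => e ep; case: (H e ep) => ? ?; lra.
lra.
Qed.

Section Pre.
Variable R : realType.
Local Notation C := R[i].
Variable V : lmodType C.
Variable ip : V -> V -> C.
Hypothesis hip : inner_product ip.
Local Notation N := (hnorm ip).
Local Notation rp := (rp ip).

Definition Setup (T0 T0' T1 T1' : op V) : Prop :=
  hilbert_space ip /\ closed_joint_pair_AFO ip T0 T0' /\
  is_adjoint ip T0' T1 /\ is_adjoint ip T0 T1'.

Variables T0 T0' T1 T1' : op V.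
Hypothesis hS : Setup T0 T0' T1 T1'.

Lemma S_H : hilbert_space ip. Proof. by case: hS. Qed.
Lemma S_joint : joint_pair_AFO ip T0 T0'. Proof. by case: hS => _ [[h _] _]. Qed.
Lemma S_iff x : dom T0 x <-> dom T0' x.
Proof. by case: S_joint => _ [_ [h _]]; exact: h. Qed.
Lemma S_lin0 : linear_op T0. Proof. by case: S_joint => [[h _] _]. Qed.
Lemma S_dense : dense_in ip (dom T0). Proof. by case: S_joint => [[_ h] _]. Qed.
Lemma S_lin0' : linear_op T0'. Proof. by case: S_joint => _ [[h _] _]. Qed.
Lemma S_dense' : dense_in ip (dom T0'). Proof. by case: S_joint => _ [[_ h] _]. Qed.
Lemma S_formal x y : dom T0 x -> dom T0 y -> ip (app T0 x) y = ip x (app T0' y).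
Proof. by case: S_joint => _ [_ [_ [h _]]]; exact: h. Qed.
Lemma S_T2 : exists c, 0 < c /\ forall x, dom T0 x -> N (app T0 x + app T0' x) <= c * N x.
Proof. by case: S_joint => _ [_ [_ [_ [h _]]]]. Qed.
Lemma S_T3 : exists mu, 0 < mu /\
  forall x, dom T0 x -> 2 * mu * N x ^+ 2 <= rp (app T0 x + app T0' x) x.
Proof.
case: S_joint => _ [_ [_ [_ [_ [mu [mup h]]]]]]; exists mu; split => // x Dx.
by move: (h x Dx); rewrite lecE => /andP[_].
Qed.
Lemma S_closed0 : closed_op ip T0. Proof. by case: hS => _ [[_ [h _]] _]. Qed.
Lemma S_closed0' : closed_op ip T0'. Proof. by case: hS => _ [[_ [_ h]] _]. Qed.
Lemma S_adj1 : is_adjoint ip T0' T1. Proof. by case: hS => _ [_ [h _]]. Qed.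
Lemma S_adj1' : is_adjoint ip T0 T1'. Proof. by case: hS => _ [_ [_ h]]. Qed.

Lemma S_swap : Setup T0' T0 T1' T1.
Proof.
split; first exact: S_H.
split; last by split; [exact: S_adj1' | exact: S_adj1].
split; last by split; [exact: S_closed0' | exact: S_closed0].
split; first by split; [exact: S_lin0' | exact: S_dense'].
split; first by split; [exact: S_lin0 | exact: S_dense].
split; first by move=> x; split => /S_iff.
split.
  move=> x y Dx Dy; rewrite -(ipJ hip) -S_formal ?(ipJ hip) //; exact/S_iff.
split.
  have [c [cp hc]] := S_T2; exists c; split => // x Dx.
  by rewrite addrC; apply: hc; apply/S_iff.
case: S_joint => _ [_ [_ [_ [_ [mu [mup h]]]]]]; exists mu; split => // x Dx.
by rewrite addrC; apply: h; apply/S_iff.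
Qed.

Lemma T0_T1 x : dom T0 x -> dom T1 x /\ app T1 x = app T0 x.
Proof.
move=> Dx; apply: (@adj_ext _ _ _ hip T0' T1 (dom T0) (app T0) S_adj1 S_dense' _ x Dx).
move=> y z Dy Dz; rewrite -(ipJ hip) -S_formal ?(ipJ hip) //; exact/S_iff.
Qed.

Lemma T0_T1' x : dom T0 x -> dom T1' x /\ app T1' x = app T0' x.
Proof.
move=> Dx; apply: (@adj_ext _ _ _ hip T0 T1' (dom T0) (app T0') S_adj1' S_dense _ x Dx).
by move=> y z Dy Dz; rewrite S_formal.
Qed.

Lemma S_lin1 : linear_op T1. Proof. exact: (adj_lin hip S_adj1 S_dense'). Qed.
Lemma S_lin1' : linear_op T1'. Proof. exact: (adj_lin hip S_adj1' S_dense). Qed.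

Definition Mop u := app T1 u + app T1' u.

Lemma Mex : exists c, 0 < c /\ forall u, dom T1 u -> dom T1' u /\
  (forall x, dom T0 x -> ip (app T0 x + app T0' x) u = ip x (Mop u)) /\
  N (Mop u) <= c * N u.
Proof.
have [c [cp hc]] := S_T2; exists c; split => // u Du.
have K0 : 0 <= c * N u by rewrite mulr_ge0 ?N_ge0 // ltW.
have philin : forall a x y, dom T0 x -> dom T0 y ->
    ip (app T0 (a *: x + y) + app T0' (a *: x + y)) u =
    a * ip (app T0 x + app T0' x) u + ip (app T0 y + app T0' y) u.
  move=> a x y Dx Dy.
  have Dx' : dom T0' x by apply/S_iff.
  have Dy' : dom T0' y by apply/S_iff.
  rewrite (S_lin0.2 a x y) // (S_lin0'.2 a x y) //.
  rewrite !(ipDl hip) !(ipZl hip); ring.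
have hb : forall d, dom T0 d ->
    complex.Re (ip (app T0 d + app T0' d) u) <= c * N u * N (id d).
  move=> d Dd /=.
  have h2 : N (app T0 d + app T0' d) * N u <= c * N d * N u.
    by apply: ler_wpM2r; [exact: N_ge0 | exact: hc].
  have e : c * N u * N d = c * N d * N u by ring.
  rewrite e; exact: le_trans (CS hip _ _) h2.
have := @riesz _ _ _ hip (dom T0) id
   (fun x => ip (app T0 x + app T0' x) u) (c * N u) S_H S_lin0.1
   (fun a x y _ _ => erefl) philin K0 hb.
case=> w [hw1 [hw2 _]].
have HH : forall y v, dom T0 y -> v = u -> ip (app T0 y) v = ip y ((fun _ => w - app T1 u) v).
  move=> y v Dy ->; rewrite (ipBr hip) -hw1 // -(S_adj1.2 y u) ?(ipDl hip) ?addrK //.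
  exact/S_iff.
have [D1' e1'] := @adj_ext _ _ _ hip T0 T1' (fun v => v = u)
   (fun _ => w - app T1 u) S_adj1' S_dense HH u (erefl u).
by split => //; rewrite /Mop e1' addrC subrK; split.
Qed.

Lemma dom11 u : dom T1 u -> dom T1' u.
Proof. by have [c [_ h]] := Mex => Du; case: (h u Du). Qed.

Lemma Mop_W x : dom T0 x -> Mop x = app T0 x + app T0' x.
Proof. by move=> Dx; rewrite /Mop (T0_T1 Dx).2 (T0_T1' Dx).2. Qed.

Lemma M_lin : linear_op (Op (dom T1) Mop).
Proof.
split; first exact: S_lin1.1.
move=> a u v /= Du Dv; rewrite /Mop (S_lin1.2 a u v) // (S_lin1'.2 a u v); try exact: dom11.
by rewrite scalerDr addrACA.
Qed.

Lemma MB u v : dom T1 u -> dom T1 v -> Mop (u - v) = Mop u - Mop v.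
Proof. exact: (opB M_lin). Qed.
Lemma MD u v : dom T1 u -> dom T1 v -> Mop (u + v) = Mop u + Mop v.
Proof. exact: (opD M_lin). Qed.
Lemma MZ a u : dom T1 u -> Mop (a *: u) = a *: Mop u.
Proof. exact: (opZ a M_lin). Qed.

Lemma M_bound : exists c, 0 < c /\ forall u, dom T1 u -> N (Mop u) <= c * N u.
Proof. by have [c [cp h]] := Mex; exists c; split => // u Du; case: (h u Du) => _ []. Qed.

Lemma M_ipW u x : dom T1 u -> dom T0 x -> ip (Mop x) u = ip x (Mop u).
Proof.
move=> Du Dx; have [c [_ h]] := Mex; case: (h u Du) => _ [h1 _].
by rewrite Mop_W // h1.
Qed.

Lemma M_sym u v : dom T1 u -> dom T1 v -> ip (Mop u) v = ip u (Mop v).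
Proof.
move=> Du; have [c [cp hc]] := M_bound.
have G v' : dom T1 v' -> rp (Mop u) v' - rp u (Mop v') = 0.
  move=> Dv; apply: (@eps_zero _ _ (N (Mop u) + c * N u)) => e ep.
  have [x [Dx hx]] := S_dense v' ep.
  have Dx1 := (T0_T1 Dx).1.
  have [h eh] : exists h, h = v' - x by exists (v' - x).
  have Dh : dom T1 h by rewrite eh; apply: subB => //; exact: S_lin1.1.
  have ev : v' = h + x by rewrite eh subrK.
  have hh : N h < e by rewrite eh.
  have Fx : rp (Mop u) x = rp u (Mop x).
    by rewrite (rpC hip) /rp -M_ipW // -(ipJ hip) ReJ.
  rewrite ev MD // (rpDr hip (Mop u) h x) (rpDr hip u (Mop h) (Mop x)) Fx.
  have a1 := CS hip (Mop u) h; have a2 := CSabs hip (Mop u) h.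
  have b1 := CS hip u (Mop h); have b2 := CSabs hip u (Mop h).
  have m1 : N (Mop u) * N h <= N (Mop u) * e.
    by apply: ler_wpM2l; [exact: N_ge0 | exact: ltW].
  have m2 : N u * N (Mop h) <= N u * (c * e).
    apply: ler_wpM2l; first exact: N_ge0.
    apply: le_trans (hc h Dh) _; apply: ler_wpM2l; [exact: ltW | exact: ltW].
  split; lra.
have Dv1 := G v; move=> Dv; apply: complex_ext; first by move: (Dv1 Dv); rewrite /rp; lra.
rewrite !(ReiJ hip) -MZ //; congr (- _).
have := G ('i *: v) (subZ _ S_lin1.1 Dv); lra.
Qed.

Lemma M_coer : exists mu, 0 < mu /\ forall u, dom T1 u -> 2 * mu * N u ^+ 2 <= rp (Mop u) u.
Proof.
have [mu [mup hm]] := S_T3; have [c [cp hc]] := M_bound.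
exists mu; split => // u Du.
rewrite -subr_ge0 -oppr_le0.
apply: (@le0_eps _ _ (N (Mop u) + c * N u + c + 4 * mu * N u)) => e ep.
have e1p : 0 < Num.min e 1 by rewrite lt_min ep ltr01.
have [x [Dx hx]] := S_dense u e1p.
have Dx1 := (T0_T1 Dx).1.
have [h eh] : exists h, h = u - x by exists (u - x).
have Dh : dom T1 h by rewrite eh; apply: subB => //; exact: S_lin1.1.
have hx1 : N h < e by rewrite eh; apply: lt_le_trans hx _; rewrite ge_min lexx.
have hx2 : N h < 1 by rewrite eh; apply: lt_le_trans hx _; rewrite ge_min lexx orbT.
have ex : x = u - h by rewrite eh opprB addrC subrK.
have Qx := hm x Dx; rewrite -Mop_W // ex MB // (N_sqr hip) in Qx.
rewrite (rpBl hip (Mop u) (Mop h) (u - h)) (rpBr hip (Mop u) u h) (rpBr hip (Mop h) u h) in Qx.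
rewrite (rpBl hip u h (u - h)) (rpBr hip u u h) (rpBr hip h u h) (rpC hip h u) in Qx.
rewrite (N_sqr hip).
have f1 : - (N (Mop u) * e) <= rp (Mop u) h.
  have := CSabs hip (Mop u) h.
  have : N (Mop u) * N h <= N (Mop u) * e by apply: ler_wpM2l; [exact: N_ge0 | exact: ltW].
  lra.
have nMh := hc h Dh.
have f2 : - (c * e * N u) <= rp (Mop h) u.
  have := CSabs hip (Mop h) u.
  have : N (Mop h) * N u <= c * e * N u.
    apply: ler_wpM2r; first exact: N_ge0.
    apply: le_trans nMh _; apply: ler_wpM2l; [exact: ltW | exact: ltW].
  lra.
have f3 : rp (Mop h) h <= c * e.
  have := CS hip (Mop h) h.
  have : N (Mop h) * N h <= c * e.
    have t1 : N (Mop h) * N h <= c * N h * 1.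
      apply: ler_pM; [exact: N_ge0 | exact: N_ge0 | exact: nMh | exact: ltW].
    have t2 : c * N h * 1 <= c * e.
      rewrite mulr1; apply: ler_wpM2l; [exact: ltW | exact: ltW].
    exact: le_trans t1 t2.
  lra.
have f4 : 4 * mu * rp u h <= 4 * mu * (N u * e).
  apply: ler_wpM2l; first by lra.
  apply: le_trans (CS hip u h) _; apply: ler_wpM2l; [exact: N_ge0 | exact: ltW].
have f5 : 0 <= 2 * mu * rp h h by apply: mulr_ge0; [lra | exact: rp_ge0].
lra.
Qed.

End Pre.


Lemma zAC (U : zmodType) (A B w D : U) : (A - B) - (w - D) = (A - w) - (B - D).
Proof. by rewrite !opprB addrACA [RHS]addrACA [- w + _]addrC. Qed.
Lemma zAC3 (U : zmodType) (x1 k1 x2 k2 : U) : (x1 + k1) - (x2 + k2) = (x1 - x2) + (k1 - k2).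
Proof. by rewrite opprD addrACA. Qed.

Section Half.
Variable R : realType.
Local Notation C := R[i].
Variable V : lmodType C.
Variable ip : V -> V -> C.
Hypothesis hip : inner_product ip.
Local Notation N := (hnorm ip).
Local Notation rp := (rp ip).
Variables T0 T0' T1 T1' : op V.
Hypothesis hS : Setup ip T0 T0' T1 T1'.
Local Notation M := (Mop T1 T1').
Local Notation DA := (set_sum (dom T0) (op_kernel T1')).
Local Notation DB := (set_sum (dom T0) (op_kernel T1)).

Let hS' := S_swap hip hS.

Lemma ker1' k : op_kernel T1' k -> dom T1 k /\ app T1 k = M k.
Proof.
move=> [Dk Tk]; split; first exact: (dom11 hip hS' Dk).
by rewrite /Mop Tk addr0.
Qed.

Lemma ker1 k : op_kernel T1 k -> dom T1' k /\ app T1' k = M k.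
Proof.
move=> [Dk Tk]; split; first exact: (dom11 hip hS Dk).
by rewrite /Mop Tk add0r.
Qed.

Lemma DA_dom a : DA a -> dom T1 a.
Proof.
move=> [x [k [Dx [Kk ->]]]]; apply: subD; first exact: (S_lin1 hip hS).1.
  exact: (T0_T1 hip hS Dx).1.
exact: (ker1' Kk).1.
Qed.

Lemma DB_dom b : DB b -> dom T1' b.
Proof.
move=> [x [k [Dx [Kk ->]]]]; apply: subD; first exact: (S_lin1' hip hS).1.
  exact: (T0_T1' hip hS Dx).1.
exact: (ker1 Kk).1.
Qed.

Lemma ker_sub (T : op V) : linear_op T -> subspace (op_kernel T).
Proof.
move=> hT; split; first by split; [exact: sub0 hT.1 | exact: op0].
move=> a x y [Dx Tx] [Dy Ty]; split; first by case: hT => [[_ h] _]; exact: h.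
by rewrite hT.2 // Tx Ty scaler0 addr0.
Qed.

Lemma DA_sub : subspace DA.
Proof.
have hK := ker_sub (S_lin1' hip hS).
split; first by exists 0, 0; split; [exact: sub0 (S_lin0 hS).1 | split; [exact: sub0 hK | rewrite addr0]].
move=> a u v [x1 [k1 [D1 [K1 ->]]]] [x2 [k2 [D2 [K2 ->]]]].
exists (a *: x1 + x2), (a *: k1 + k2); split; first by case: (S_lin0 hS).1 => _; apply.
split; first by case: hK => _; apply.
by rewrite scalerDr addrACA.
Qed.

Lemma T1_DA x k : dom T0 x -> op_kernel T1' k -> app T1 (x + k) = app T0 x + M k.
Proof.
move=> Dx Kk; rewrite (opD (S_lin1 hip hS)) ?(T0_T1 hip hS Dx).2 ?(ker1' Kk).2 //.
  exact: (T0_T1 hip hS Dx).1.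
exact: (ker1' Kk).1.
Qed.

Lemma H1 : exists mu, 0 < mu /\ forall x k, dom T0 x -> op_kernel T1' k ->
  mu * (N (x + k) ^+ 2 + N k ^+ 2) <= rp (app T1 (x + k)) (x + k).
Proof.
have [mu [mup hco]] := M_coer hip hS; exists mu; split => // x k Dx Kk.
have Dk := (ker1' Kk).1; have Dx1 := (T0_T1 hip hS Dx).1.
have Da : dom T1 (x + k) by apply: subD => //; exact: (S_lin1 hip hS).1.
have c1 := hco _ Da; have c2 := hco _ Dk.
rewrite (MD hip hS) // (Mop_W hip hS) // in c1.
rewrite T1_DA //.
have [m em] : exists m, m = M k by exists (M k).
rewrite -em in c1 c2 *.
have Dx' : dom T0' x by apply/(S_iff hS).
have f1 : rp (app T0 x) k = 0.
  by rewrite /rp ((S_adj1' hS).2 x k Dx Kk.1) Kk.2 ip0r.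
have f2 : rp (app T0' x) x = rp (app T0 x) x.
  by rewrite /rp -(ipJ hip) -(S_formal hS) // ReJ.
have f3 : rp (app T0' x) k = rp m x.
  by rewrite /rp ((S_adj1 hS).2 x k) // (ker1' Kk).2 -em -(ipJ hip) ReJ.
rewrite !(rpDl hip, rpDr hip) in c1 *.
lra.
Qed.

Lemma half_perp h : (forall a, DA a -> ip (app T1 a) h = 0) -> h = 0.
Proof.
move=> H.
have HH : forall y v, dom T0 y -> v = h -> ip (app T0 y) v = ip y ((fun _ => 0) v).
  move=> y v Dy ->; rewrite ip0r //.
  have := H (y + 0); rewrite addr0 (T0_T1 hip hS Dy).2; apply.
  by exists y, 0; split => //; split; [exact: sub0 (ker_sub (S_lin1' hip hS)) | rewrite addr0].
have [Dh Th] := adj_ext hip (S_adj1' hS) (S_dense hS) HH (erefl h).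
have Kh : op_kernel T1' h by split.
have := H h; rewrite (ker1' Kh).2 => H2.
have Z : ip (M h) h = 0 by apply: H2; exists 0, h; split; [exact: sub0 (S_lin0 hS).1 | split => //; rewrite add0r].
have [mu [mup hco]] := M_coer hip hS.
have := hco h (ker1' Kh).1; rewrite /rp Z /= => hh.
rewrite pmulr_rle0 ?mulr_gt0 // in hh.
apply: (N_eq0 hip); have := N_ge0 ip h; nra.
Qed.

Lemma half_inj a a' : DA a -> DA a' -> app T1 a = app T1 a' -> a = a'.
Proof.
move=> [x1 [k1 [D1 [K1 ->]]]] [x2 [k2 [D2 [K2 ->]]]] E.
have [mu [mup hco]] := H1.
have Dx : dom T0 (x1 - x2) by apply: subB => //; exact: (S_lin0 hS).1.
have Kk : op_kernel T1' (k1 - k2) by apply: subB => //; exact: ker_sub (S_lin1' hip hS).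
have A1 : DA (x1 + k1) by exists x1, k1.
have A2 : DA (x2 + k2) by exists x2, k2.
have := hco _ _ Dx Kk.
rewrite -zAC3 (opB (S_lin1 hip hS) (DA_dom A1) (DA_dom A2)) E subrr (rp0l hip).
move=> h; apply/eqP; rewrite -subr_eq0; apply/eqP; apply: (N_eq0 hip).
rewrite pmulr_rle0 // in h; have := sqr_ge0 (N (k1 - k2)); have := N_ge0 ip (x1 + k1 - (x2 + k2)); nra.
Qed.


Lemma H4 w : (forall e : R, 0 < e -> exists a, DA a /\ N (app T1 a - w) < e) ->
  exists a, DA a /\ app T1 a = w.
Proof.
move=> H.
have [mu [mup hco]] := H1.
have [c [cp hc]] := M_bound hip hS.
have Hn : forall n, exists p : V * V, dom T0 p.1 /\ op_kernel T1' p.2 /\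
    N (app T1 (p.1 + p.2) - w) < epsn R n.
  move=> n; have [a [[x [k [Dx [Kk ea]]]] ha]] := H _ (inv_pos R n).
  by exists (x, k); rewrite /= -ea.
have [f Hf] := choice_nat Hn.
pose xs n := (f n).1; pose ks n := (f n).2; pose vs n := app T1 (xs n + ks n).
have Dxs n : dom T0 (xs n) by case: (Hf n).
have Kks n : op_kernel T1' (ks n) by case: (Hf n) => _ [].
have cv : cvg ip vs w by apply: cvg_inv => n; case: (Hf n) => _ [].
have hK := ker_sub (S_lin1' hip hS).
have bnd n m : mu * N (xs n + ks n - (xs m + ks m)) <= N (vs n - vs m) /\
               mu * N (ks n - ks m) <= N (vs n - vs m).
  have Dx : dom T0 (xs n - xs m) by apply: subB => //; exact: (S_lin0 hS).1.
  have Kk : op_kernel T1' (ks n - ks m) by apply: subB.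
  have A1 : DA (xs n + ks n) by exists (xs n), (ks n).
  have A2 : DA (xs m + ks m) by exists (xs m), (ks m).
  have := hco _ _ Dx Kk.
  rewrite -zAC3 (opB (S_lin1 hip hS) (DA_dom A1) (DA_dom A2)) -/(vs n) -/(vs m).
  have hc1 := CS hip (vs n - vs m) (xs n + ks n - (xs m + ks m)).
  have s0 := N_ge0 ip (xs n + ks n - (xs m + ks m)).
  have r0 := N_ge0 ip (ks n - ks m).
  have g0 := N_ge0 ip (vs n - vs m).
  move: hc1 s0 r0 g0.
  set s := N (xs n + ks n - (xs m + ks m)); set r := N (ks n - ks m).
  set g := N (vs n - vs m); set q := rp _ _.
  move=> hc1 s0 r0 g0 h.
  have h1 : mu * s ^+ 2 <= g * s by have := sqr_ge0 r; nra.
  have h2 : mu * r ^+ 2 <= g * s by have := sqr_ge0 s; nra.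
  have ms : mu * s <= g.
    case: (eqVneq s 0) => [->|sn0]; first by rewrite mulr0.
    have sp : 0 < s by rewrite lt0r sn0.
    by rewrite -(ler_pM2r sp) -mulrA -expr2.
  split => //.
  have h3 : mu * (mu * r ^+ 2) <= mu * (g * s) by apply: ler_wpM2l => //; exact: ltW.
  have h4 : g * (mu * s) <= g * g by apply: ler_wpM2l.
  have mr0 : 0 <= mu * r by apply: mulr_ge0 => //; exact: ltW.
  nra.
have divb (a b : R) : mu * a <= b -> a <= mu^-1 * b.
  by move=> hab; rewrite -(ler_pM2l mup) mulrA mulfV ?gt_eqF // mul1r.
have cvs := cvg_cauchy hip cv.
have cks : cauchy_seq ip ks.
  apply: (cauchy_bound (v := vs) (K := mu^-1)) => //; first by rewrite invr_ge0 ltW.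
  by move=> n m; apply: divb; case: (bnd n m).
have cxs : cauchy_seq ip xs.
  apply: (cauchy_bound (v := vs) (K := 2 * mu^-1)) => //.
    by apply: mulr_ge0 => //; rewrite invr_ge0 ltW.
  move=> n m; have [b1 b2] := bnd n m.
  have e : xs n - xs m = (xs n + ks n - (xs m + ks m)) - (ks n - ks m) by rewrite (zAC3 (xs n) (ks n) (xs m) (ks m)) addrK.
  have t := N_tri hip (xs n + ks n - (xs m + ks m)) (- (ks n - ks m)).
  rewrite NN // -e in t.
  have := divb _ _ b1; have := divb _ _ b2; lra.
have [x hx] := hs_complete (S_H hS) cxs.
have [k hk] := hs_complete (S_H hS) cks.
have Kk : op_kernel T1' k := adj_ker_closed hip (S_adj1' hS) (S_dense hS) Kks hk.
have Dk1 := (ker1' Kk).1.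
have cM : cvg ip (fun n => M (ks n)) (M k).
  apply: (cvg_bound2 (v := ks) (w := ks) (b := k) (c := k) (K := c)) => //; first exact: ltW.
  move=> n; have Dkn := (ker1' (Kks n)).1.
  rewrite -(MB hip hS) //.
  apply: le_trans (hc _ _) _; first by apply: subB => //; exact: (S_lin1 hip hS).1.
  apply: ler_wpM2l; first exact: ltW.
  have := N_ge0 ip (ks n - k); lra.
have hT0 : cvg ip (fun n => app T0 (xs n)) (w - M k).
  apply: (cvg_bound2 (v := vs) (w := fun n => M (ks n)) (b := w) (c := M k) (K := 1)) => //.
  move=> n /=.
  have e : app T0 (xs n) = vs n - M (ks n) by rewrite /vs T1_DA // addrK.
  rewrite e zAC mul1r.
  have := N_tri hip (vs n - w) (- (M (ks n) - M k)); rewrite NN //.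
have [Dx Tx] := S_closed0 hS Dxs hx hT0.
exists (x + k); split; first by exists x, k.
by rewrite T1_DA // Tx subrK.
Qed.

Lemma half_surj f : exists a, DA a /\ app T1 a = f.
Proof.
have Slin : forall a x y, DA x -> DA y -> app T1 (a *: x + y) = a *: app T1 x + app T1 y.
  by move=> a x y Dx Dy; rewrite (S_lin1 hip hS).2 //; exact: DA_dom.
have plin : forall a x y, DA x -> DA y ->
    ip (app T1 (a *: x + y)) f = a * ip (app T1 x) f + ip (app T1 y) f.
  by move=> a x y Dx Dy; rewrite Slin // (ipDl hip) (ipZl hip).
have hb : forall d, DA d -> complex.Re (ip (app T1 d) f) <= N f * N (app T1 d).
  by move=> d Dd; rewrite mulrC; exact: (CS hip).
have := @riesz _ _ _ hip DA (app T1) (fun a => ip (app T1 a) f) (N f) (S_H hS) DA_sub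
  Slin plin (N_ge0 ip f) hb.
case=> w [hw1 [_ hw3]].
have [a0 [Da0 Ta0]] := H4 hw3.
have : f - w = 0.
  apply: half_perp => a Da; rewrite (ipBr hip) hw1 // subrr //.
move/eqP; rewrite subr_eq0 => /eqP ef.
by exists a0; rewrite ef.
Qed.

Lemma half_adj a b : DA a -> DB b -> ip (app T1 a) b = ip a (app T1' b).
Proof.
move=> [x [k' [Dx [Kk' ->]]]] [y [k [Dy [Kk ->]]]].
have Dk'1 := (ker1' Kk').1; have Dk1' := (ker1 Kk).1.
have Dx1 := (T0_T1 hip hS Dx).1; have Dy1' := (T0_T1' hip hS Dy).1.
rewrite (opD (S_lin1 hip hS) Dx1 Dk'1) (T0_T1 hip hS Dx).2.
rewrite (opD (S_lin1' hip hS) Dy1' Dk1') (T0_T1' hip hS Dy).2.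
rewrite !(ipDl hip) !(ipDr hip).
have Dy' : dom T0' y by apply/(S_iff hS).
have h1 : ip (app T0 x) y = ip x (app T0' y) by exact: (S_formal hS).
have h2 : ip (app T0 x) k = ip x (app T1' k) by exact: ((S_adj1' hS).2 x k).
have h3 : ip (app T1 k') y = ip k' (app T0' y).
  by rewrite -(ipJ hip) -((S_adj1 hS).2 y k') // (ipJ hip).
have h4 : ip (app T1 k') k = ip k' (app T1' k).
  by rewrite (ker1' Kk').2 (ker1 Kk).2 (M_sym hip hS) //; exact: (ker1 Kk).1 || exact: (dom11 hip hS' Dk1').
by rewrite h1 h2 h3 h4.
Qed.

End Half.


Local Close Scope complex_scope.

Lemma set_sum_iff (R : realType) (V : lmodType R[i]) (P Q E : V -> Prop) x :
  (forall y, P y <-> Q y) -> set_sum P E x -> set_sum Q E x.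
Proof. by move=> H [d [e [Pd [Ee ->]]]]; exists d, e; split => //; apply/H. Qed.

Theorem corollary3p2 (R : realType) (V : lmodType R[i]) (ip : V -> V -> R[i])
    (T0 T0' T1 T1' : op V) :
  hilbert_space ip ->
  closed_joint_pair_AFO ip T0 T0' ->
  is_adjoint ip T0' T1 ->   (* T1  = (T0~)^* *)
  is_adjoint ip T0 T1' ->   (* T1~ = T0^*    *)
  let W0 := dom T0 in
  let A := op_restrict T1 (set_sum W0 (op_kernel T1')) in
  let B := op_restrict T1' (set_sum W0 (op_kernel T1)) in
  is_adjoint ip A B /\ is_adjoint ip B A /\
  bijective_onto_space A /\ bijective_onto_space B.
Proof.
move=> hH hJ hA1 hA1' W0 A B.
have hip := hs_inner hH.
have hS : Setup ip T0 T0' T1 T1' by split => //; split.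
have hS' := S_swap hip hS.
have iff1 : forall y, dom T0 y <-> dom T0' y := S_iff hS.
have iff2 : forall y, dom T0' y <-> dom T0 y by move=> y; split => /iff1.
have toB b : set_sum (dom T0') (op_kernel T1) b -> dom B b by apply: set_sum_iff.
have ofB b : dom B b -> set_sum (dom T0') (op_kernel T1) b by apply: set_sum_iff.
have toA a : set_sum (dom T0') (op_kernel T1') a -> dom A a by apply: set_sum_iff.
have ofA a : dom A a -> set_sum (dom T0') (op_kernel T1') a by apply: set_sum_iff.
split; [|split; [|split]].
- split => [y|x y Dx Dy]; last exact: (half_adj hip hS).
  split => [Dy|[z Hz]].
    by exists (app T1' y) => x Dx; exact: (half_adj hip hS).
  have [b [Db Tb]] := half_surj hip hS' z.
  have : y - b = 0.
    apply: (half_perp hip hS) => a Da.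
    rewrite (ipBr hip) Hz // -Tb (half_adj hip hS) //; first by rewrite subrr.
    exact: toB.
  by move/eqP; rewrite subr_eq0 => /eqP ->; exact: toB.
- split => [y|x y Dx Dy]; last exact: (half_adj hip hS' (ofB _ Dx) (ofA _ Dy)).
  split => [Dy|[z Hz]].
    by exists (app T1 y) => x Dx; exact: (half_adj hip hS' (ofB _ Dx) (ofA _ Dy)).
  have [a [Da Ta]] := half_surj hip hS z.
  have : y - a = 0.
    apply: (half_perp hip hS') => b Db.
    rewrite (ipBr hip) (Hz _ (toB _ Db)) -Ta (half_adj hip hS' Db (ofA _ Da)) subrr //.
  by move/eqP; rewrite subr_eq0 => /eqP ->.
- split; first exact: (half_inj hip hS).
  by move=> h; have [a [Da Ta]] := half_surj hip hS h; exists a.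
- split.
    by move=> x y Dx Dy; apply: (half_inj hip hS'); apply: ofB.
  by move=> h; have [b [Db Tb]] := half_surj hip hS' h; exists b; split => //; exact: toB.
Qed.
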